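(* Let $i\ge1$, $j\ge 1$ and $n\ge0$ be integers. If $2^{i-1}<d_j(n)\le 2^i$, then $d_j(n)=d_{i+1}(n)$. Furthermore, $2^{i-1}<d_{i+1}(n)\le 2^i$ if and only if $-2^{i-1}<(n\bmod 2^{i+1})-2^i<2^{i-1}$.
   Context: For $i\in\mathbb{N}$ and $n\in\mathbb{N}_0$, $d_i(n)=2^{i-1}-\left|(n\bmod 2^i)-2^{i-1}\right|$. *)

(* Defs.v *)
From Stdlib Require Import ZArith.
Open Scope Z_scope.

Definition d (i : Z) (n : Z) : Z :=
  2 ^ (i - 1) - Z.abs ((n mod 2 ^ i) - 2 ^ (i - 1)).

(* Main.v *)
Require Import Defs.
From Stdlib Require Import ZArith Lia.
Open Scope Z_scope.

Theorem lemma14 (i j n : Z) (hi : 1 <= i) (hj : 1 <= j) (hn : 0 <= n) :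
  (2 ^ (i - 1) < d j n <= 2 ^ i -> d j n = d (i + 1) n) /\
  (2 ^ (i - 1) < d (i + 1) n <= 2 ^ i <->
     - 2 ^ (i - 1) < (n mod 2 ^ (i + 1)) - 2 ^ i < 2 ^ (i - 1)).
Proof.
  unfold d.
  set (h := 2 ^ (i - 1)).
  assert (hh : 0 < h) by (apply Z.pow_pos_nonneg; lia).
  assert (e1 : 2 ^ i = 2 * h).
  { unfold h. replace i with (Z.succ (i - 1)) at 1 by lia. rewrite Z.pow_succ_r; lia. }
  assert (e2 : 2 ^ (i + 1) = 4 * h).
  { rewrite Z.pow_add_r by lia. rewrite e1. lia. }
  replace (i + 1 - 1) with i by lia.
  rewrite e1, e2.
  assert (hs := Z.mod_pos_bound n (4 * h) ltac:(lia)).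
  split; [|lia].
  intros H.
  destruct (Z_le_gt_dec j i) as [Hji|Hji].
  - assert (2 ^ (j - 1) <= h) by (unfold h; apply Z.pow_le_mono_r; lia).
    lia.
  - set (K := 2 ^ (j - i - 1)).
    assert (hK : 0 < K) by (apply Z.pow_pos_nonneg; lia).
    assert (f1 : 2 ^ j = 4 * h * K).
    { rewrite <- e2. unfold K. rewrite <- Z.pow_add_r by lia. f_equal; lia. }
    assert (f2 : 2 ^ (j - 1) = 2 * h * K).
    { rewrite <- e1. unfold K. rewrite <- Z.pow_add_r by lia. f_equal; lia. }
    rewrite f1, f2 in *.
    assert (Hm : n mod (4 * h) = (n mod (4 * h * K)) mod (4 * h)).
    { symmetry. apply Z.mod_mod_divide. exists K; lia. }
    rewrite Hm.
    set (r := n mod (4 * h * K)) in *.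
    assert (hr := Z.mod_pos_bound n (4 * h * K) ltac:(nia)).
    fold r in hr.
    destruct (Z_le_gt_dec r (2 * h * K)) as [Hr|Hr].
    + rewrite (Z.mod_small r) by lia. lia.
    + assert (Hq : r mod (4 * h) = r - 4 * h * (K - 1)).
      { symmetry. apply Z.mod_unique with (q := K - 1); nia. }
      rewrite Hq. nia.
Qed.
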